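(* Let $m,n,a$ be natural numbers with $m\geq 2$, $1\leq a\leq 9$ and $a\neq 6$. Then the equation $$B_n = a\left(\frac{10^m-1}{9}\right)$$ has no solution. That is, no balancing number is a decimal repdigit with at least two digits whose repeated digit differs from $6$.
   Context: The balancing sequence $(B_n)_{n\geq 0}$ is defined by $B_0=0$, $B_1=1$ and $B_{n+1}=6B_n-B_{n-1}$ for $n\geq 1$. For $1\le a\le 9$ and $m\ge 1$, the number $a\frac{10^m-1}{9}$ is the decimal integer consisting of $m$ copies of the digit $a$. *)

(* Defs.v *)
From mathcomp Require Import all_boot.

(* Balancing sequence: B_0 = 0, B_1 = 1, B_(n+2) = 6 B_(n+1) - B_n.
   Computed over nat; the sequence is nondecreasing so 6 B_(n+1) >= B_n and
   the truncated subtraction is exact. *)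
Fixpoint balpair (n : nat) : nat * nat :=
  match n with
  | 0 => (0, 1)
  | k.+1 => let: (x, y) := balpair k in (y, 6 * y - x)
  end.

Definition B (n : nat) : nat := (balpair n).1.

Definition repdigit (a m : nat) : nat := a * ((10 ^ m - 1) %/ 9).

(* Main.v *)
Require Import Defs.
From mathcomp Require Import all_boot.
From mathcomp Require Import zify.

Lemma B_succ n : B n.+1 = (balpair n).2.
Proof. rewrite /B /=; by case: (balpair n). Qed.

Lemma B_rec n : B n.+2 = 6 * B n.+1 - B n.
Proof.
rewrite (B_succ n.+1) B_succ /B /=; by case: (balpair n).
Qed.

Lemma B_mono n : B n <= B n.+1.
Proof.
elim: n => [|n IH]; first by [].
rewrite B_rec; lia.
Qed.

Lemma B_mod n : B n.+2 %% 220 = (6 * (B n.+1 %% 220) + 220 - B n %% 220) %% 220.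
Proof.
rewrite B_rec. have := B_mono n. move: (B n) (B n.+1) => x y H. lia.
Qed.

Definition step (p : nat * nat) := (p.2, (6 * p.2 + 220 - p.1) %% 220).

Lemma B_iter n : (B n %% 220, B n.+1 %% 220) = iter n step (0, 1).
Proof.
elim: n => [|n IH]; first by [].
rewrite iterS -IH /step /= B_mod //.
Qed.

Lemma iter_per n : iter n step (0,1) = iter (n %% 12) step (0,1).
Proof.
rewrite {1}(divn_eq n 12) addnC iterD; congr iter.
elim: (n %/ 12) => [|k IH]; first by [].
by rewrite mulSn iterD IH.
Qed.

Lemma B_vals n : B n %% 220 \in [:: 0; 1; 6; 35; 204; 89; 110; 131; 16; 185; 214; 219].
Proof.
have := B_iter n. rewrite iter_per => H.
have : (B n %% 220) = (iter (n %% 12) step (0, 1)).1 by rewrite -H.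
move=> ->. have : n %% 12 < 12 by apply: ltn_pmod.
move: (n %% 12) => k. do 12 (case: k => [_|k]; first by vm_compute).
by [].
Qed.

Definition r m := (10 ^ m - 1) %/ 9.

Lemma r_eq m : 10 ^ m = 9 * r m + 1.
Proof.
elim: m => [|m IH]; first by [].
rewrite /r expnS IH.
have -> : 10 * (9 * r m + 1) - 1 = 9 * (10 * r m + 1) by lia.
rewrite mulKn //; lia.
Qed.

Lemma r_succ m : r m.+1 = 10 * r m + 1.
Proof.
rewrite {1}/r expnS r_eq.
have -> : 10 * (9 * r m + 1) - 1 = 9 * (10 * r m + 1) by lia.
by rewrite mulKn.
Qed.

Lemma r_vals m : 2 <= m -> (r m %% 220 == 11) || (r m %% 220 == 111).
Proof.
elim: m => [|m IH] //; rewrite ltnS leq_eqVlt => /orP [/eqP <- //|].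
move=> /IH /orP [] /eqP H; rewrite r_succ; apply/orP.
- right; apply/eqP. move: (r m) H => x H; lia.
- left; apply/eqP. move: (r m) H => x H; lia.
Qed.

Theorem theorem1 (m n a : nat) :
  2 <= m -> 1 <= a <= 9 -> a != 6 -> B n <> repdigit a m.
Proof.
move=> Hm Ha Ha6 E.
have HB := B_vals n.
have Hr := r_vals m Hm.
have E2 : B n %% 220 = (a * (r m %% 220)) %% 220.
  rewrite E /repdigit -/(r m) modnMmr //.
rewrite E2 in HB; clear E E2.
case/orP: Hr => /eqP ->  in HB;
move: Ha Ha6 HB; case/andP; move: a => [|[|[|[|[|[|[|[|[|[|a]]]]]]]]]] //.
Qed.
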